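(* The assignment $(G,H)\mapsto\mathcal A_{lc}(G,H)$ is a functor from $(\text{Graphs})\times(\text{Graphs})$ to $\mathbb C$-algebras which is covariant in the first factor and contravariant in the second, where morphisms of graphs are the usual graph homomorphisms.
   Context: Graphs are finite with symmetric edge sets; write $v\sim w$ for adjacency; a graph homomorphism $\phi:G\to H$ is a map $V(G)\to V(H)$ with $v\sim w\Rightarrow\phi(v)\sim\phi(w)$. For graphs $G,H$, $\mathcal A_{lc}(G,H)$ is the unital complex algebra generated by $e_{v,x}$ ($v\in V(G)$, $x\in V(H)$) with relations: $\sum_{x}e_{v,x}=1$; $e_{v,x}^2=e_{v,x}$; $e_{v,x}e_{v,y}=0$ for $x\ne y$; $e_{v,x}e_{w,y}=0$ if $v\sim w$ and $x\not\sim y$; $e_{v,x}e_{w,y}=e_{w,y}e_{v,x}$ if $v\sim w$. *)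

(* Defs.v *)
From HB Require Import structures.
From mathcomp Require Import all_boot all_algebra.
From mathcomp Require Import boolp Rstruct complex.
Set Implicit Arguments. Unset Strict Implicit. Unset Printing Implicit Defensive.
Import GRing.Theory.
Local Open Scope ring_scope.
Local Open Scope quotient_scope.

Notation C := (Rdefinitions.R[i]).

(** Finite graphs with symmetric adjacency relation (loops allowed). *)
Record graph := Graph { gV :> finType; adj : rel gV; adj_sym : symmetric adj }.
Arguments adj {g}.

Definition is_graph_hom (G H : graph) (f : G -> H) : Prop :=
  forall v w : G, adj v w -> adj (f v) (f w).

Definition ghom (G H : graph) := {f : G -> H | is_graph_hom f}.
Definition ghom_fun G H (f : ghom G H) : G -> H := proj1_sig f.
Coercion ghom_fun : ghom >-> Funclass.
Definition ghom_id (G : graph) : ghom G G := exist (@is_graph_hom G G) id (fun v w h => h).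
Definition ghom_comp (G1 G2 G3 : graph) (g : ghom G2 G3) (f : ghom G1 G2) : ghom G1 G3 :=
  exist (@is_graph_hom G1 G3) (g \o f) (fun v w h => proj2_sig g _ _ (proj2_sig f _ _ h)).

(** A_lc(G,H): the universal unital complex algebra on generators e_{v,x},
    built as the quotient of the type of formal algebra expressions
    ([term]) by the least congruence [eqv] containing the unital associative
    C-algebra axioms and the defining relations of A_lc(G,H). *)
Section Alc.
Variables (G H : graph).

Inductive term : Type :=
| tC of C
| tgen of G & H
| tadd of term & term
| tmul of term & term.

Definition tsum (s : seq term) := foldr tadd (tC 0) s.

Inductive eqv : term -> term -> Prop :=
| eqv_refl t : eqv t t
| eqv_sym s t : eqv s t -> eqv t s
| eqv_trans s t u : eqv s t -> eqv t u -> eqv s u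
| eqv_add s s' t t' : eqv s s' -> eqv t t' -> eqv (tadd s t) (tadd s' t')
| eqv_mul s s' t t' : eqv s s' -> eqv t t' -> eqv (tmul s t) (tmul s' t')
| eqv_Cadd a b : eqv (tC (a + b)) (tadd (tC a) (tC b))
| eqv_Cmul a b : eqv (tC (a * b)) (tmul (tC a) (tC b))
| eqv_addA s t u : eqv (tadd s (tadd t u)) (tadd (tadd s t) u)
| eqv_addC s t : eqv (tadd s t) (tadd t s)
| eqv_add0 t : eqv (tadd (tC 0) t) t
| eqv_addN t : eqv (tadd (tmul (tC (-1)) t) t) (tC 0)
| eqv_mulA s t u : eqv (tmul s (tmul t u)) (tmul (tmul s t) u)
| eqv_mul1l t : eqv (tmul (tC 1) t) t
| eqv_mul1r t : eqv (tmul t (tC 1)) t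
| eqv_mulDl s t u : eqv (tmul (tadd s t) u) (tadd (tmul s u) (tmul t u))
| eqv_mulDr s t u : eqv (tmul s (tadd t u)) (tadd (tmul s t) (tmul s u))
| eqv_central a t : eqv (tmul (tC a) t) (tmul t (tC a))
| eqv_sum1 (v : G) : eqv (tsum [seq tgen v x | x <- enum H]) (tC 1)
| eqv_idem (v : G) (x : H) : eqv (tmul (tgen v x) (tgen v x)) (tgen v x)
| eqv_orth (v : G) (x y : H) : x != y -> eqv (tmul (tgen v x) (tgen v y)) (tC 0)
| eqv_adj (v w : G) (x y : H) : adj v w -> ~~ adj x y ->
    eqv (tmul (tgen v x) (tgen w y)) (tC 0)
| eqv_comm (v w : G) (x y : H) : adj v w ->
    eqv (tmul (tgen v x) (tgen w y)) (tmul (tgen w y) (tgen v x)).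

HB.instance Definition _ := gen_eqMixin term.
HB.instance Definition _ := gen_choiceMixin term.

Definition eqvb (s t : term) : bool := `[< eqv s t >].

Lemma eqvb_refl : reflexive eqvb.
Proof. by move=> t; apply/asboolP; apply: eqv_refl. Qed.
Lemma eqvb_sym : symmetric eqvb.
Proof.
by move=> s t; apply/asboolP/asboolP; apply: eqv_sym.
Qed.
Lemma eqvb_trans : transitive eqvb.
Proof.
move=> t s u /asboolP h1 /asboolP h2; apply/asboolP; exact: eqv_trans h1 h2.
Qed.

Canonical eqv_equiv := EquivRel eqvb eqvb_refl eqvb_sym eqvb_trans.

Definition Alc_ := {eq_quot eqvb}.
Definition Alc : Type := Alc_.
HB.instance Definition _ := Choice.on Alc.

Local Notation pi := (\pi_Alc_ : term -> Alc).
Local Notation rep := (@repr _ Alc_ : Alc -> term).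

Lemma pi_eq s t : eqv s t -> pi s = pi t.
Proof. by move=> h; apply/eqquotP; apply/asboolP. Qed.
Lemma rep_eqv s : eqv (rep (pi s)) s.
Proof.
have /eqquotP /asboolP := reprK (pi s).
by [].
Qed.
Lemma piK (q : Alc) : pi (rep q) = q.
Proof. exact: reprK. Qed.

Definition zeroA : Alc := pi (tC 0).
Definition oneA : Alc := pi (tC 1).
Definition addA (p q : Alc) : Alc := locked (pi (tadd (rep p) (rep q))).
Definition mulA (p q : Alc) : Alc := locked (pi (tmul (rep p) (rep q))).
Definition scaleA (a : C) (q : Alc) : Alc := locked (pi (tmul (tC a) (rep q))).
Definition oppA (q : Alc) : Alc := locked (pi (tmul (tC (-1)) (rep q))).
Definition genA (v : G) (x : H) : Alc := pi (tgen v x).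

Lemma addE s t : addA (pi s) (pi t) = pi (tadd s t).
Proof. rewrite /addA -lock. by apply: pi_eq; apply: eqv_add; apply: rep_eqv. Qed.
Lemma mulE s t : mulA (pi s) (pi t) = pi (tmul s t).
Proof. rewrite /mulA -lock. by apply: pi_eq; apply: eqv_mul; apply: rep_eqv. Qed.
Lemma scaleE a t : scaleA a (pi t) = pi (tmul (tC a) t).
Proof. rewrite /scaleA -lock. by apply: pi_eq; apply: eqv_mul; [apply: eqv_refl|apply: rep_eqv]. Qed.

Lemma oppE t : oppA (pi t) = pi (tmul (tC (-1)) t).
Proof. rewrite /oppA -lock. by apply: pi_eq; apply: eqv_mul; [apply: eqv_refl|apply: rep_eqv]. Qed.

Ltac qelim := repeat (let q := fresh "q" in move=> q; rewrite -[q]piK);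
  rewrite /zeroA /oneA; rewrite ?oppE ?addE ?mulE ?scaleE ?addE ?mulE ?scaleE ?addE ?mulE ?scaleE;
  apply: pi_eq.

Lemma addA_assoc : associative addA.
Proof. qelim; exact: eqv_addA. Qed.
Lemma addA_comm : commutative addA.
Proof. qelim; exact: eqv_addC. Qed.
Lemma add0A : left_id zeroA addA.
Proof. qelim; exact: eqv_add0. Qed.
Lemma addNA : left_inverse zeroA oppA addA.
Proof. qelim; exact: eqv_addN. Qed.
Lemma mulA_assoc : associative mulA.
Proof. qelim; exact: eqv_mulA. Qed.
Lemma mul1A : left_id oneA mulA.
Proof. qelim; exact: eqv_mul1l. Qed.
Lemma mulA1 : right_id oneA mulA.
Proof. qelim; exact: eqv_mul1r. Qed.
Lemma mulADl : left_distributive mulA addA.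
Proof. qelim; exact: eqv_mulDl. Qed.
Lemma mulADr : right_distributive mulA addA.
Proof. qelim; exact: eqv_mulDr. Qed.

HB.instance Definition _ := GRing.isPzRing.Build Alc
  addA_assoc addA_comm add0A addNA mulA_assoc mul1A mulA1 mulADl mulADr.

Lemma scaleAA a b (q : Alc) : scaleA a (scaleA b q) = scaleA (a * b) q.
Proof.
rewrite -[q]piK !scaleE; apply: pi_eq; apply: eqv_trans (eqv_mulA _ _ _) _.
by apply: eqv_mul; [apply: eqv_sym; apply: eqv_Cmul | apply: eqv_refl].
Qed.
Lemma scale1A : left_id 1 scaleA.
Proof. qelim; exact: eqv_mul1l. Qed.
Lemma scaleADr : right_distributive scaleA (@GRing.add Alc).
Proof. move=> a p q; rewrite -[p]piK -[q]piK /GRing.add /= addE !scaleE addE; apply: pi_eq; exact: eqv_mulDr. Qed.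
Lemma scaleADl (q : Alc) : {morph scaleA^~ q : a b / a + b}.
Proof.
move=> a b /=; rewrite -[q]piK /GRing.add /= !scaleE addE; apply: pi_eq.
apply: eqv_trans (eqv_mulDl _ _ _).
by apply: eqv_mul; [apply: eqv_Cadd | apply: eqv_refl].
Qed.

HB.instance Definition _ := GRing.Zmodule_isLmodule.Build C Alc
  scaleAA scale1A scaleADr scaleADl.

Definition gen (v : G) (x : H) : Alc := pi (tgen v x).

Lemma scaleAl (a : C) (p q : Alc) : a *: (p * q) = (a *: p) * q.
Proof.
rewrite -[p]piK -[q]piK /GRing.scale /GRing.mul /= !mulE !scaleE mulE.
apply: pi_eq; exact: eqv_mulA.
Qed.
Lemma scaleAr (a : C) (p q : Alc) : a *: (p * q) = p * (a *: q).
Proof.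
rewrite -[p]piK -[q]piK /GRing.scale /GRing.mul /= !mulE !scaleE mulE.
apply: pi_eq; apply: eqv_trans (eqv_central _ _) _.
apply: eqv_trans (eqv_sym (eqv_mulA _ _ _)) _.
apply: eqv_mul; first exact: eqv_refl.
exact: eqv_sym (eqv_central _ _).
Qed.

Lemma gen_sum1 (v : G) : \sum_(x : H) gen v x = 1.
Proof.
rewrite /GRing.one /= /oneA -(pi_eq (eqv_sum1 v)).
rewrite -big_enum /=. elim: (enum H) => [|x s IH] /=; first by rewrite big_nil.
by rewrite big_cons IH /GRing.add /= addE.
Qed.
Lemma gen_idem (v : G) (x : H) : gen v x * gen v x = gen v x.
Proof. by rewrite /GRing.mul /= mulE; apply: pi_eq; apply: eqv_idem. Qed.
Lemma gen_orth (v : G) (x y : H) : x != y -> gen v x * gen v y = 0.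
Proof. by move=> h; rewrite /GRing.mul /= mulE; apply: pi_eq; apply: eqv_orth. Qed.
Lemma gen_adj (v w : G) (x y : H) : adj v w -> ~~ adj x y -> gen v x * gen w y = 0.
Proof.
by move=> h1 h2; rewrite /GRing.mul /= mulE; apply: pi_eq; apply: eqv_adj.
Qed.
Lemma gen_comm (v w : G) (x y : H) : adj v w -> gen v x * gen w y = gen w y * gen v x.
Proof.
by move=> h; rewrite /GRing.mul /= !mulE; apply: pi_eq; apply: eqv_comm.
Qed.

End Alc.

Arguments gen {G H}.

Definition is_Calg_hom (G1 H1 G2 H2 : graph) (f : Alc G1 H1 -> Alc G2 H2) : Prop :=
  [/\ forall p q, f (p + q) = f p + f q,
      forall (a : C) p, f (a *: p) = a *: f p,
      f 1 = 1 &
      forall p q, f (p * q) = f p * f q].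

(* Main.v *)
Require Import Defs.
From HB Require Import structures.
From mathcomp Require Import all_boot all_algebra.
From mathcomp Require Import boolp Rstruct complex.
Local Open Scope ring_scope.
Import GRing.Theory.
Local Open Scope quotient_scope.

Section Tr.
Variables (G1 G2 H1 H2 : graph) (phi : ghom G1 G2) (psi : ghom H2 H1).

Definition trgen (v : G1) (x : H1) : Alc G2 H2 :=
  \sum_(y : H2 | psi y == x) gen (phi v) y.

Fixpoint tr (t : term G1 H1) : Alc G2 H2 :=
  match t with
  | tC a => a *: (1 : Alc G2 H2)
  | tgen v x => trgen v x
  | tadd s t => tr s + tr t
  | tmul s t => tr s * tr t
  end.

Lemma tr_sum (s : seq (term G1 H1)) : tr (tsum s) = \sum_(t <- s) tr t.
Proof.
elim: s => [|t s IH] /=; first by rewrite big_nil scale0r.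
by rewrite big_cons IH.
Qed.

Lemma sC (a : C) (p : Alc G2 H2) : (a *: (1 : Alc G2 H2)) * p = a *: p.
Proof. by rewrite -scaleAl mul1r. Qed.
Lemma Cs (a : C) (p : Alc G2 H2) : p * (a *: (1 : Alc G2 H2)) = a *: p.
Proof. by rewrite -scaleAr mulr1. Qed.

Lemma tr_eqv s t : eqv s t -> tr s = tr t.
Proof.
elim => {s t} /=.
- by [].
- by move=> s t _ ->.
- by move=> s t u _ -> _ ->.
- by move=> s s' t t' _ -> _ ->.
- by move=> s s' t t' _ -> _ ->.
- by move=> a b; rewrite scalerDl.
- by move=> a b; rewrite sC scalerA.
- by move=> s t u; rewrite addrA.
- by move=> s t; rewrite addrC.
- by move=> t; rewrite scale0r add0r.
- by move=> t; rewrite sC scaleN1r addNr scale0r.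
- by move=> s t u; rewrite mulrA.
- by move=> t; rewrite scale1r mul1r.
- by move=> t; rewrite scale1r mulr1.
- by move=> s t u; rewrite mulrDl.
- by move=> s t u; rewrite mulrDr.
- by move=> a t; rewrite sC Cs.
- move=> v; rewrite tr_sum big_map big_enum /= scale1r /trgen.
  rewrite -(@gen_sum1 _ H2 (phi v)) (partition_big psi predT) //=.
- move=> v x; rewrite /trgen mulr_suml; apply: eq_bigr => y /eqP hy.
  rewrite mulr_sumr (bigD1 y) /=; last by rewrite hy.
  rewrite gen_idem big1 ?addr0 // => z /andP [_ hz].
  by apply: gen_orth; rewrite eq_sym.
- move=> v x y hxy; rewrite scale0r /trgen mulr_suml big1 // => y1 /eqP h1.
  rewrite mulr_sumr big1 // => y2 /eqP h2; apply: gen_orth.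
  by apply: contra hxy => /eqP e; rewrite -h1 -h2 e.
- move=> v w x y hvw hxy; rewrite scale0r /trgen mulr_suml big1 // => y1 /eqP h1.
  rewrite mulr_sumr big1 // => y2 /eqP h2; apply: gen_adj.
    exact: (proj2_sig phi).
  apply: contra hxy => hh; rewrite -h1 -h2; exact: (proj2_sig psi).
- move=> v w x y hvw; rewrite /trgen mulr_suml.
  under eq_bigr => i _ do rewrite mulr_sumr.
  rewrite exchange_big /= mulr_suml; apply: eq_bigr => y2 _.
  rewrite mulr_sumr; apply: eq_bigr => y1 _.
  apply: gen_comm; exact: (proj2_sig phi).
Qed.

Definition Fm (p : Alc G1 H1) : Alc G2 H2 := tr (repr p).

Lemma Fm_pi s : Fm (\pi_(Alc_ G1 H1) s) = tr s.
Proof. exact: tr_eqv (rep_eqv s). Qed.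

Lemma Fm_hom : is_Calg_hom Fm.
Proof.
split.
- move=> p q; rewrite -[p]piK -[q]piK /GRing.add /= addE !Fm_pi //.
- move=> a p; rewrite -[p]piK /GRing.scale /= scaleE !Fm_pi /= sC //.
- by rewrite /GRing.one /= /oneA Fm_pi /= scale1r.
- move=> p q; rewrite -[p]piK -[q]piK /GRing.mul /= mulE !Fm_pi //.
Qed.

End Tr.

Lemma hom_sum (G1 G2 H1 H2 : graph) (f : Alc G1 H1 -> Alc G2 H2) :
  is_Calg_hom f -> forall (I : Type) (r : seq I) (P : pred I) (F : I -> Alc G1 H1),
  f (\sum_(i <- r | P i) F i) = \sum_(i <- r | P i) f (F i).
Proof.
case=> hadd _ _ _ I r P F; apply: (big_morph f hadd).
have h := hadd 0 0; rewrite addr0 in h.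
by apply: (addrI (f 0)); rewrite addr0 -h.
Qed.

Theorem mainTheorem8 :
  exists F : forall (G1 G2 H1 H2 : graph), ghom G1 G2 -> ghom H2 H1 ->
               Alc G1 H1 -> Alc G2 H2,
    [/\ (* each F phi psi is a unital C-algebra homomorphism acting on generators by
           e_{v,x} |-> sum_{y : psi y = x} e_{phi v, y} *)
        forall (G1 G2 H1 H2 : graph) (phi : ghom G1 G2) (psi : ghom H2 H1),
          is_Calg_hom (F G1 G2 H1 H2 phi psi) /\
          forall (v : G1) (x : H1),
            F G1 G2 H1 H2 phi psi (gen v x) = \sum_(y : H2 | psi y == x) gen (phi v) y,
        (* identities are preserved *)
        forall (G H : graph) (p : Alc G H),
          F G G H H (ghom_id G) (ghom_id H) p = p &
        (* composition is preserved (covariantly in G, contravariantly in H) *)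
        forall (G1 G2 G3 H1 H2 H3 : graph)
               (phi : ghom G1 G2) (phi' : ghom G2 G3)
               (psi : ghom H2 H1) (psi' : ghom H3 H2) (p : Alc G1 H1),
          F G1 G3 H1 H3 (ghom_comp phi' phi) (ghom_comp psi psi') p
          = F G2 G3 H2 H3 phi' psi' (F G1 G2 H1 H2 phi psi p)].
Proof.
exists Fm; split.
- move=> G1 G2 H1 H2 phi psi; split; first exact: Fm_hom.
  by move=> v x; rewrite /gen Fm_pi.
- move=> G H p; rewrite /Fm; rewrite -[in RHS](piK p).
  elim: (repr p) => [a|v x|s IHs t IHt|s IHs t IHt] /=.
  + by rewrite /GRing.one /= /oneA /GRing.scale /= scaleE; apply: pi_eq; apply: eqv_mul1r.
  + by rewrite /trgen big_pred1_eq.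
  + by rewrite IHs IHt /GRing.add /= addE.
  + by rewrite IHs IHt /GRing.mul /= mulE.
- move=> G1 G2 G3 H1 H2 H3 phi phi' psi psi' p.
  rewrite {1 3}/Fm; case: (@Fm_hom _ _ _ _ phi' psi') => hadd hscale hone hmul.
  elim: (repr p) => [a|v x|s IHs t IHt|s IHs t IHt] /=.
  + by rewrite hscale hone.
  + rewrite /trgen (@hom_sum _ _ _ _ _ (@Fm_hom _ _ _ _ phi' psi')).
    rewrite (partition_big psi' (fun y => psi y == x)) //=.
    apply: eq_bigr => y hy; rewrite /gen Fm_pi /= /trgen.
    apply: eq_bigl => z /=; case: (psi' z =P y) => [->|]; by rewrite ?hy ?andbF.
  + by rewrite IHs IHt hadd.
  + by rewrite IHs IHt hmul.
Qed.
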